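(* For every integer $n\ge2$, \[ \sum_{j=0}^{n}\frac{B_j}{n-j+1}=1-(n+1)\sum_{k=1}^{n}{n\brace k}c_kH_k . \]
   Context: $B_j$ is the $j$th Bernoulli number ($\frac{t}{e^t-1}=\sum_{m\ge0}B_m\frac{t^m}{m!}$). ${n\brace k}$ is the Stirling number of the second kind, $H_k=\sum_{i=1}^k1/i$. The Cauchy numbers of the first kind are $c_k=k!\int_0^1\binom{x}{k}dx=\int_0^1x(x-1)\cdots(x-k+1)\,dx$. *)

(* Defs.v *)
From mathcomp Require Import all_boot all_order all_algebra.
Set Implicit Arguments. Unset Strict Implicit. Unset Printing Implicit Defensive.
Import Order.TTheory GRing.Theory Num.Theory.
Local Open Scope ring_scope.

(* Bernoulli numbers: coefficients of t/(e^t-1) = sum_m B_m t^m/m!.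
   Comparing coefficients of t^(m+1) in (e^t-1) * sum_k B_k t^k/k! = t gives
   B_0 = 1 and sum_(k<=m) C(m+1,k) B_k = 0 for m >= 1, i.e.
   B_m = -1/(m+1) * sum_(k<m) C(m+1,k) B_k  (so B_1 = -1/2). *)
Fixpoint bern_seq (n : nat) : seq rat :=
  match n with
  | 0 => [:: 1]
  | m.+1 => let s := bern_seq m in
            rcons s (- (m.+2)%:R^-1 *
                     \sum_(k < m.+1) ('C(m.+2, k))%:R * nth 0 s k)
  end.
Definition bernoulli (n : nat) : rat := nth 0 (bern_seq n) n.

Fixpoint stirling2 (n k : nat) : nat :=
  match n, k with
  | 0, 0 => 1
  | 0, _.+1 => 0
  | _.+1, 0 => 0
  | n'.+1, k'.+1 => k'.+1 * stirling2 n' k'.+1 + stirling2 n' k'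
  end.

Definition harmonic (k : nat) : rat := \sum_(1 <= i < k.+1) (i%:R)^-1.

Definition poly_int01 (p : {poly rat}) : rat :=
  \sum_(i < size p) p`_i / (i.+1)%:R.

Definition cauchy1 (k : nat) : rat :=
  poly_int01 (\prod_(i < k) ('X - (i%:R)%:P)).

(* Main.v *)
Require Import Defs.
From mathcomp Require Import all_boot all_order all_algebra.
From mathcomp Require Import ring lra.
Import GRing.Theory Num.Theory.
Local Open Scope ring_scope.

Definition ff (k : nat) : {poly rat} := \prod_(i < k) ('X - (i%:R)%:P).
Notation St n k := ((stirling2 n k)%:R : rat).

Lemma ffS k : ff k.+1 = ff k * ('X - (k%:R)%:P).
Proof. by rewrite /ff big_ord_recr. Qed.

Lemma X_ff k : 'X * ff k = ff k.+1 + k%:R *: ff k.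
Proof. by rewrite ffS -mul_polyC; ring. Qed.

Lemma stir_big n k : (n < k)%N -> stirling2 n k = 0%N.
Proof.
elim: n k => [|n IH] [|k] //= lt; rewrite ltnS in lt.
by rewrite (IH k) // (IH k.+1) ?muln0 //; apply: ltnW.
Qed.

Lemma shiftA n (w : nat -> rat) :
  \sum_(i < n.+1) ((i%:R * St n i) * w i) *: ff i =
  \sum_(i < n.+1) (((i.+1)%:R * St n i.+1) * w i.+1) *: ff i.+1.
Proof.
rewrite big_ord_recl /= mul0r mul0r scale0r add0r.
rewrite [RHS]big_ord_recr /= stir_big // mulr0 mul0r scale0r addr0.
by apply: eq_bigr => i _; rewrite /bump /= add1n.
Qed.

Lemma GR n (w : nat -> rat) :
 \sum_(k < n.+2) (St n.+1 k * w k) *: ff k =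
 'X * \sum_(k < n.+1) (St n k * w k) *: ff k
 + \sum_(k < n.+1) (St n k * (w k.+1 - w k)) *: ff k.+1.
Proof.
rewrite big_ord_recl /= mul0r scale0r add0r mulr_sumr -big_split /=.
transitivity (\sum_(i < n.+1) ((St n i * w i.+1) *: ff i.+1
                  + (((i.+1)%:R * St n i.+1) * w i.+1) *: ff i.+1)).
  apply: eq_bigr => i _; rewrite /bump /= add1n -scalerDl; congr (_ *: _).
  by rewrite /= natrD natrM; ring.
rewrite big_split /= -shiftA -big_split /=.
apply: eq_bigr => i _.
rewrite -scalerAr X_ff scalerDr scalerA addrAC -scalerDl; congr (_ *: _ + _ *: _); ring.
Qed.

Lemma Xn_ff n : 'X^n = \sum_(k < n.+1) St n k *: ff k.
Proof.
elim: n => [|n IH]; first by rewrite big_ord1 /= scale1r /ff big_ord0 expr0.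
have := GR n (fun _ => 1).
under eq_bigr do rewrite mulr1.
under [in X in _ = _ + X -> _]eq_bigr do rewrite subrr mulr0 scale0r.
rewrite big1_eq addr0; under [in X in _ = X -> _]eq_bigr do rewrite mulr1.
by move=> ->; rewrite exprS IH.
Qed.
Lemma size_bern n : size (bern_seq n) = n.+1.
Proof. by elim: n => [|n IH] //=; rewrite size_rcons IH. Qed.

Lemma bern_prefix n d k : (k <= n)%N -> nth 0 (bern_seq (d + n)) k = nth 0 (bern_seq n) k.
Proof.
move=> kn; elim: d => [|d IH] //=.
by rewrite nth_rcons size_bern ltnS (leq_trans kn (leq_addl _ _)).
Qed.

Lemma bernE n k : (k <= n)%N -> nth 0 (bern_seq n) k = bernoulli k.
Proof. by move=> kn; rewrite -(subnK kn) bern_prefix. Qed.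

Lemma bern_rec m : \sum_(k < m.+2) ('C(m.+2,k))%:R * bernoulli k = 0.
Proof.
rewrite big_ord_recr /= binSn.
have -> : bernoulli m.+1 = - (m.+2)%:R^-1 *
      \sum_(k < m.+1) ('C(m.+2, k))%:R * bernoulli k.
  rewrite /bernoulli /= nth_rcons size_bern ltnn eqxx; congr (_ * _).
  by apply: eq_bigr => i _; rewrite bernE // -ltnS.
set s := \sum_(_ < _) _.
have h : (m.+2)%:R != 0 :> rat by rewrite pnatr_eq0.
by rewrite mulrA mulrN divff // mulN1r subrr.
Qed.

Lemma ff_eval k y : (ff k).[y] = \prod_(i < k) (y - i%:R).
Proof. by rewrite /ff horner_prod; apply: eq_bigr => i _; rewrite hornerXsubC. Qed.

Lemma ff_shift k y : (ff k.+1).[y+1] - (ff k.+1).[y] = (k.+1)%:R * (ff k).[y].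
Proof.
rewrite {1}ff_eval big_ord_recl /= ffS hornerM hornerXsubC ff_eval.
have -> : \prod_(i < k) (y + 1 - (bump 0 i)%:R) = \prod_(i < k) (y - i%:R).
  by apply: eq_bigr => i _; rewrite /bump /= add1n -natr1; ring.
set P := \prod_(_ < _) _.
by rewrite subr0 -natr1; ring.
Qed.

Definition r n : {poly rat} := \sum_(k < n.+1) (St n k / (k.+1)%:R) *: ff k.+1.

Lemma r_shift n y : (r n).[y+1] - (r n).[y] = y ^+ n.
Proof.
rewrite /r !horner_sum -sumrB -hornerXn Xn_ff horner_sum.
apply: eq_bigr => i _; rewrite !hornerZ -mulrBr ff_shift.
have h : (i.+1)%:R != 0 :> rat by rewrite pnatr_eq0.
by rewrite mulrA -(mulrA _ _^-1) mulVf // mulr1.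
Qed.

Lemma r0 n : (r n).[0] = 0.
Proof.
rewrite /r horner_sum big1 // => i _; rewrite hornerZ ff_eval big_ord_recl /=.
by rewrite subrr !mul0r mulr0.
Qed.

From mathcomp Require Import zify.

Lemma bin_swap m i j : (i + j <= m)%N ->
  ('C(m, j) * 'C(m - j, i) = 'C(m, i) * 'C(m - i, j))%N.
Proof.
move=> h.
have h1 := bin_fact (_ : j <= m)%N; have h2 := bin_fact (_ : i <= m - j)%N.
have h3 := bin_fact (_ : i <= m)%N; have h4 := bin_fact (_ : j <= m - i)%N.
have e : (m - j - i = m - i - j)%N by rewrite subnAC.
have jm : (j <= m)%N by lia. have im : (i <= m)%N by lia.
have ijm : (i <= m - j)%N by lia. have jim : (j <= m - i)%N by lia.
move: (h1 jm) (h2 ijm) (h3 im) (h4 jim); rewrite e.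
set a := j`!; set b := i`!; set c := (m - i - j)`!; set M := m`!.
set d := (m - j)`!; set d' := (m - i)`!.
move=> E1 E2 E3 E4.
have pos : (0 < a * b * c)%N by rewrite !muln_gt0 !fact_gt0.
apply/eqP; rewrite -(eqn_pmul2r pos); apply/eqP.
transitivity M.
  by rewrite -E1 -E2; ring.
by rewrite -E3 -E4; ring.
Qed.

Lemma bern_sum k : \sum_(j < k.+1) ('C(k.+1,j))%:R * bernoulli j = (k == 0%N)%:R.
Proof.
case: k => [|k]; last exact: bern_rec.
by rewrite big_ord1 /= /bernoulli /= mul1r.
Qed.

Lemma pow_diff (y : rat) k : (y+1)^+k - y^+k = \sum_(i < k) ('C(k,i))%:R * y^+i.
Proof.
rewrite exprD1n big_ord_recr /= binn mulr1n addrK.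
by apply: eq_bigr => i _; rewrite mulr_natl.
Qed.

Lemma Dsum n (y : rat) : \sum_(j < n.+1) ('C(n.+1,j))%:R * bernoulli j *
   ((y+1)^+(n.+1-j) - y^+(n.+1-j)) = (n.+1)%:R * y^+n.
Proof.
transitivity (\sum_(j < n.+1) \sum_(i < n.+1) (if (i < n.+1 - j)%N then
     'C(n.+1,j)%:R * bernoulli j * ('C(n.+1-j,i)%:R * y^+i) else 0)).
  apply: eq_bigr => j _; rewrite pow_diff mulr_sumr (big_ord_widen n.+1 (fun i : nat =>
    'C(n.+1,j)%:R * bernoulli j * ('C(n.+1-j,i)%:R * y^+i))) ?leq_subr //.
  by rewrite big_mkcond.
rewrite exchange_big /=.
transitivity (\sum_(i < n.+1) 'C(n.+1,i)%:R * y^+i * ((n.+1 - i)%N == 1%N)%:R).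
  apply: eq_bigr => i _.
  transitivity (\sum_(j < n.+1 - i) 'C(n.+1,i)%:R * y^+i * ('C(n.+1-i,j)%:R * bernoulli j)).
    rewrite (big_ord_widen n.+1 (fun j : nat =>
      'C(n.+1,i)%:R * y^+i * ('C(n.+1-i,j)%:R * bernoulli j))) ?leq_subr //.
    rewrite [RHS]big_mkcond; apply: eq_bigr => j _.
    have -> : (i < n.+1 - j)%N = (j < n.+1 - i)%N by apply/idP/idP; lia.
    case: ifP => // h.
    have hij : (i + j <= n.+1)%N by lia.
    have /(congr1 (fun k : nat => k%:R : rat)) := bin_swap n.+1 i j hij.
    rewrite !natrM => e2.
    transitivity ((('C(n.+1, j))%:R * ('C(n.+1 - j, i))%:R) * y ^+ i * bernoulli j); first by ring.
    by rewrite e2; ring.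
  rewrite -mulr_sumr.
  have [k ek] : exists k, (n.+1 - i)%N = k.+1 by exists (n - i)%N; have := ltn_ord i; lia.
  by rewrite ek bern_sum eqSS.
rewrite big_ord_recr /= big1 ?add0r.
  by rewrite subSnn binSn mulr1.
move=> i _ /=.
have -> : (n.+1 - i == 1)%N = false by apply/negbTE; have := ltn_ord i; lia.
by rewrite mulr0.
Qed.

Definition Phi n : {poly rat} := (n.+1)%:R^-1 *:
   \sum_(j < n.+1) (('C(n.+1,j))%:R * bernoulli j) *: 'X^(n.+1 - j).

Lemma Phi_shift n y : (Phi n).[y+1] - (Phi n).[y] = y ^+ n.
Proof.
rewrite /Phi !hornerZ !horner_sum -mulrBr -sumrB.
under eq_bigr do rewrite !hornerZ !hornerXn -mulrBr.
by rewrite Dsum mulrA mulVf ?mul1r // pnatr_eq0.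
Qed.

Lemma Phi0 n : (Phi n).[0] = 0.
Proof.
rewrite /Phi hornerZ horner_sum big1 ?mulr0 // => i _.
rewrite hornerZ hornerXn expr0n.
have -> : (n.+1 - i == 0)%N = false by apply/negbTE; have := ltn_ord i; lia.
by rewrite mulr0.
Qed.

Lemma poly_nat0 (p : {poly rat}) : (forall i : nat, p.[i%:R] = 0) -> p = 0.
Proof.
move=> h; apply/eqP; apply/negPn/negP => nz.
set rs := [seq i%:R | i <- iota 0 (size p)] : seq rat.
have H1 : all (root p) rs by apply/allP => x /mapP [i _ ->]; rewrite /root h.
have H2 : uniq rs.
  by rewrite map_inj_in_uniq ?iota_uniq // => a b _ _ /eqP; rewrite eqr_nat => /eqP.
by have := max_poly_roots nz H1 H2; rewrite size_map size_iota ltnn.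
Qed.

Lemma r_Phi n : r n = Phi n.
Proof.
apply/eqP; rewrite -subr_eq0; apply/eqP/poly_nat0.
elim=> [|i IH]; first by rewrite hornerD hornerN r0 Phi0 subrr.
move: IH; rewrite -natr1 !hornerD !hornerN => IH.
have e1 := r_shift n i%:R; have e2 := Phi_shift n i%:R.
have : (r n).[i%:R + 1] - (Phi n).[i%:R + 1] =
   ((r n).[i%:R + 1] - (r n).[i%:R]) - ((Phi n).[i%:R + 1] - (Phi n).[i%:R])
   + ((r n).[i%:R] - (Phi n).[i%:R]) by ring.
by rewrite e1 e2 IH subrr addr0.
Qed.

Lemma harm0 : harmonic 0 = 0.
Proof. by rewrite /harmonic big_geq. Qed.

Lemma harmS k : harmonic k.+1 = harmonic k + (k.+1)%:R^-1.
Proof. by rewrite /harmonic big_nat_recr. Qed.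

Definition q n : {poly rat} := \sum_(k < n.+1) (St n k * harmonic k) *: ff k.

Lemma q_rec n : q n.+1 = 'X * q n + r n.
Proof.
rewrite /q (GR n harmonic) /r; congr (_ + _).
by apply: eq_bigr => i _; rewrite harmS addrAC subrr add0r.
Qed.

Definition a n j : rat := (('C(n,j))%:R - 1) * bernoulli j / j%:R.
Definition Q n : {poly rat} := harmonic n *: 'X^n + \sum_(j < n.+1) a n j *: 'X^(n - j).

Lemma a0 n : a n 0 = 0.
Proof. by rewrite /a invr0 mulr0. Qed.

Lemma Q_rec n : Q n.+1 = 'X * Q n + Phi n.
Proof.
have eX : 'X * Q n = harmonic n *: 'X^(n.+1) + \sum_(j < n.+1) a n j *: 'X^(n.+1 - j).
  rewrite /Q mulrDr -scalerAr -exprS mulr_sumr; congr (_ + _).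
  by apply: eq_bigr => j _; rewrite -scalerAr -exprS subSn // -ltnS.
have eQ : Q n.+1 = harmonic n.+1 *: 'X^(n.+1) + \sum_(j < n.+1) a n.+1 j *: 'X^(n.+1 - j).
  rewrite /Q big_ord_recr /= /a binn subrr !mul0r scale0r; congr (_ + _); exact: addr0.
have eP : Phi n = \sum_(j < n.+1) (('C(n.+1,j))%:R * bernoulli j / (n.+1)%:R) *: 'X^(n.+1 - j).
  by rewrite /Phi scaler_sumr; apply: eq_bigr => j _; rewrite scalerA mulrC.
rewrite eX eQ eP harmS scalerDl -addrA -addrA; congr (_ + _).
rewrite -big_split /= big_ord_recl [in RHS]big_ord_recl /= !a0 !scale0r !add0r.
rewrite subn0; congr (_ + _).
  by rewrite /bernoulli /= mulr1 bin0 mul1r.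
apply: eq_bigr => j _; rewrite /bump /= add1n subSS -scalerDl; congr (_ *: _).
rewrite /a.
have h1 : (n.+1)%:R != 0 :> rat by rewrite pnatr_eq0.
have h2 : (j.+1)%:R != 0 :> rat by rewrite pnatr_eq0.
have e := mul_bin_diag n.+1 j.
have /(congr1 (fun k : nat => k%:R : rat)) := e; rewrite !natrM /= => e2.
have e3 : ('C(n, j))%:R = (j.+1)%:R * ('C(n.+1, j.+1))%:R / (n.+1)%:R :> rat.
  by rewrite -e2 mulrC mulrA mulVf ?mul1r.
have eA : ('C(n, j.+1))%:R = ('C(n.+1, j.+1))%:R - (j.+1)%:R * ('C(n.+1, j.+1))%:R / (n.+1)%:R :> rat.
  by rewrite -e3 binS natrD addrK.
rewrite eA.
field; by rewrite !(addrC 1) !natr1 h1 h2.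
Qed.

Lemma q_Q n : q n = Q n.
Proof.
elim: n => [|n IH].
  rewrite /q /Q !big_ord1 /= harm0 mulr0 /a invr0 mulr0 !scale0r; exact: (esym (addr0 _)).
by rewrite q_rec Q_rec IH r_Phi.
Qed.

Lemma B0 : bernoulli 0 = 1.
Proof. by []. Qed.

Lemma G n : harmonic n + \sum_(j < n.+1) (('C(n.+1,j))%:R - 1) * bernoulli j / j%:R
   = n%:R / (n.+1)%:R.
Proof.
elim: n => [|n IH].
  by rewrite harm0 big_ord1 /= bin0 subrr !mul0r.
have hB := bern_rec n.
rewrite big_ord_recr in hB; rewrite /= binSn in hB.
rewrite big_ord_recr harmS.
have h1 : (n.+1)%:R != 0 :> rat by rewrite pnatr_eq0.
have h2 : (n.+2)%:R != 0 :> rat by rewrite pnatr_eq0.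
have E : \sum_(j < n.+1) (('C(n.+2,j))%:R - 1) * bernoulli j / j%:R =
   \sum_(j < n.+1) ((('C(n.+1,j))%:R - 1) * bernoulli j / j%:R +
     (('C(n.+2,j))%:R * bernoulli j / (n.+2)%:R - ((j : nat) == 0%N)%:R / (n.+2)%:R)).
  apply: eq_bigr => -[[|j] hj] _ /=.
    by rewrite !bin0 B0 invr0 !mulr0 mulr1 mul1r subrr add0r.
  have e := mul_bin_diag n.+2 j.
  have /(congr1 (fun k : nat => k%:R : rat)) := e; rewrite !natrM /= => e2.
  have h3 : (j.+1)%:R != 0 :> rat by rewrite pnatr_eq0.
  have eA : ('C(n.+1, j.+1))%:R = ('C(n.+2, j.+1))%:R
       - (j.+1)%:R * ('C(n.+2, j.+1))%:R / (n.+2)%:R :> rat.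
    by rewrite -e2 (binS n.+1 j) natrD mulrAC divff // mul1r addrK.
  rewrite eA mul0r subr0.
  field; by rewrite -[1]/(1%:R) -?[2]/(2%:R) -!natrD !pnatr_eq0.
have -> : (('C(n.+2, n.+1))%:R - 1) * bernoulli n.+1 / (n.+1)%:R = bernoulli n.+1 :> rat.
  rewrite binSn -natr1 addrK mulrAC divff // mul1r //.
rewrite E big_split sumrB -mulr_suml.
have -> : \sum_(i < n.+1) ('C(n.+2, i))%:R * bernoulli i =
   - (n.+2)%:R * bernoulli n.+1 :> rat.
  by apply/eqP; rewrite mulNr -addr_eq0 hB.
have -> : \sum_(i < n.+1) ((i : nat) == 0%N)%:R / (n.+2)%:R = (n.+2)%:R^-1 :> rat.
  rewrite big_ord_recl /= mul1r big1 ?addr0 // => i _.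
  by rewrite mul0r.
rewrite addrA (addrC _ (_^-1)) -!addrA (addrA (harmonic n)) IH.
field; by rewrite -[1]/(1%:R) -?[2]/(2%:R) -!natrD !pnatr_eq0.
Qed.

Lemma int_ext (p : {poly rat}) N : (size p <= N)%N ->
  poly_int01 p = \sum_(i < N) p`_i / (i.+1)%:R.
Proof.
move=> hN; rewrite /poly_int01 (big_ord_widen N (fun i : nat => p`_i / (i.+1)%:R)) //.
rewrite big_mkcond; apply: eq_bigr => i _; case: ifP => // h.
by rewrite nth_default ?mul0r // leqNgt h.
Qed.

Lemma int_add p1 p2 : poly_int01 (p1 + p2) = poly_int01 p1 + poly_int01 p2.
Proof.
set N := maxn (size p1) (size p2).
rewrite (int_ext (p1 + p2) N) ?(int_ext p1 N) ?(int_ext p2 N).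
- by rewrite -big_split; apply: eq_bigr => i _; rewrite coefD mulrDl.
- exact: leq_maxr.
- exact: leq_maxl.
- by apply: leq_trans (size_polyD _ _) _.
Qed.

Lemma int_scale c p : poly_int01 (c *: p) = c * poly_int01 p.
Proof.
rewrite (int_ext (c *: p) (size p)) ?size_scale_leq // /poly_int01 mulr_sumr.
by apply: eq_bigr => i _; rewrite coefZ mulrA.
Qed.

Lemma int0 : poly_int01 0 = 0.
Proof. by rewrite /poly_int01 size_poly0 big_ord0. Qed.

Lemma int_sumZ m (c : nat -> rat) (P : nat -> {poly rat}) :
  poly_int01 (\sum_(k < m) c k *: P k) = \sum_(k < m) c k * poly_int01 (P k).
Proof.
elim: m => [|m IH]; first by rewrite !big_ord0 int0.
by rewrite !big_ord_recr /= int_add IH int_scale.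
Qed.

Lemma int_Xn m : poly_int01 'X^m = (m.+1)%:R^-1.
Proof.
rewrite /poly_int01 size_polyXn big_ord_recr /= big1 ?add0r.
  by rewrite coefXn eqxx mul1r.
by move=> i _; rewrite coefXn /= (ltn_eqF (ltn_ord i)) mul0r.
Qed.

Lemma int_Q n : poly_int01 (Q n) =
  harmonic n / (n.+1)%:R + \sum_(j < n.+1) a n j / ((n - j).+1)%:R.
Proof.
rewrite /Q int_add int_scale int_Xn.
by rewrite (int_sumZ _ (a n) (fun j => 'X^(n - j))); under eq_bigr do rewrite int_Xn.
Qed.

Lemma int_q n : poly_int01 (q n) = \sum_(k < n.+1) St n k * harmonic k * cauchy1 k.
Proof. by rewrite /q (int_sumZ _ (fun k => St n k * harmonic k) ff). Qed.

Theorem mainTheorem13 (n : nat) (hn : (2 <= n)%N) :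
  \sum_(0 <= j < n.+1) bernoulli j / (n - j + 1)%:R =
  1 - (n.+1)%:R * \sum_(1 <= k < n.+1) (stirling2 n k)%:R * cauchy1 k * harmonic k.
Proof.
have eT : \sum_(1 <= k < n.+1) (stirling2 n k)%:R * cauchy1 k * harmonic k
          = poly_int01 (Q n).
  rewrite -q_Q int_q -(big_mkord xpredT (fun k => St n k * harmonic k * cauchy1 k)).
  rewrite big_ltn // harm0 mulr0 mul0r add0r.
  by apply: eq_bigr => k _; rewrite mulrAC.
rewrite eT int_Q big_mkord.
have hX : \sum_(j < n.+1) (('C(n.+1,j))%:R - 1) * bernoulli j / j%:R
   = n%:R / (n.+1)%:R - harmonic n by rewrite -(G n) addrC addKr.
have h1 : (n.+1)%:R != 0 :> rat by rewrite pnatr_eq0.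
have E : \sum_(j < n.+1) bernoulli j / (n - j + 1)%:R =
  \sum_(j < n.+1) ((('C(n.+1,j))%:R - 1) * bernoulli j / j%:R
     - (n.+1)%:R * (a n j / ((n - j).+1)%:R) + ((j : nat) == 0%N)%:R / (n.+1)%:R).
  apply: eq_bigr => -[[|j] hj] _ /=.
    by rewrite a0 subn0 addn1 bin0 B0 invr0 !mulr0 mul0r mulr0 subrr add0r.
  rewrite addn1 mul0r addr0 /a.
  have hjn : (j < n)%N by [].
  have e := mul_bin_down n.+1 j.+1.
  have /(congr1 (fun k : nat => k%:R : rat)) := e; rewrite !natrM /= => e2.
  have ed : (n.+1 - j.+1)%N = (n - j.+1).+1 by rewrite subSn.
  rewrite ed in e2.
  have h2 : ((n - j.+1).+1)%:R != 0 :> rat by rewrite pnatr_eq0.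
  have h3 : (j.+1)%:R != 0 :> rat by rewrite pnatr_eq0.
  have eC : ('C(n.+1, j.+1))%:R = (n.+1)%:R * ('C(n, j.+1))%:R / ((n - j.+1).+1)%:R :> rat.
    by rewrite e2 mulrC mulrA mulVf // mul1r.
  have ed2 : ((n - j.+1).+1)%:R = (n.+1)%:R - (j.+1)%:R :> rat.
    have -> : ((n - j.+1).+1 = n.+1 - j.+1)%N by lia.
    rewrite natrB //; lia.
  rewrite eC ed2; rewrite ed2 in h2.
  by field; rewrite !(addrC 1) !natr1 h2 h3.
rewrite E big_split sumrB hX /= -mulr_sumr.
have -> : \sum_(i < n.+1) ((i : nat) == 0%N)%:R / (n.+1)%:R = (n.+1)%:R^-1 :> rat.
  rewrite big_ord_recl /= mul1r big1 ?addr0 // => i _.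
  by rewrite mul0r.
by field; rewrite !(addrC 1) !natr1 h1.
Qed.
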